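(* Let $\kappa$ be a regular uncountable cardinal with $\kappa^{<\kappa}=\kappa$ and $\gamma^\omega<\kappa$ for all $\gamma<\kappa$, and suppose $\kappa=\lambda^+$. Then the linear order $I$ described in the context is $(<\kappa,bs)$-stable.
   Context: $I^0$: order $\kappa\times\mathbb Q$ lexicographically; $I^0$ is the set of $f:\omega\to\kappa\times\mathbb Q$, $f(n)=(f_1(n),f_2(n))$, with $\{n\mid f_1(n)\ne0\}$ finite, ordered by comparing at the least $n$ where they differ. Construct linear orders $I^0\subseteq I^1\subseteq\dots$ ($i<\kappa$): given $I^i$, for each $\nu\in I^i$ add a new element $\nu^{i+1}$ with $\nu^{i+1}<\nu$ and, for all $\tau\in I^i\setminus\{\nu\}$, $\tau<\nu^{i+1}$ iff $\tau<\nu$ (for distinct $\nu,\mu$, $\nu^{i+1}<\mu^{i+1}$ iff $\nu<\mu$); $I^{i+1}=I^i\cup\{\nu^{i+1}\mid\nu\in I^i\}$; unions at limits; $I=\bigcup_{i<\kappa}I^i$. For a linear order $A$, $tp_{bs}(a,B,A)$ is the set of atomic and negated atomic formulas with parameters from $B$ satisfied by $a$; $A$ is $(<\kappa,bs)$-stable if for every $B\subseteq A$ with $|B|<\kappa$, $|\{tp_{bs}(a,B,A)\mid a\in A\}|<\kappa$. *)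

(* Defs.v *)
From mathcomp Require Import all_boot all_order all_algebra.
Set Implicit Arguments.
Unset Strict Implicit.

Definition inj_le (A B : Type) : Prop :=
  exists f : A -> B, forall x y, f x = f y -> x = y.
Definition card_lt (A B : Type) : Prop := inj_le A B /\ ~ inj_le B A.

(** * The cardinal kappa, presented as a well-ordered type (K, ltK)
    whose proper initial segments all have smaller cardinality, i.e.
    (K, ltK) is (isomorphic to) the initial ordinal kappa. *)
Section Kappa.
Variables (K : Type) (ltK : K -> K -> Prop).

Definition seg (a : K) : Type := {b : K | ltK b a}.

Definition strict_wellorder : Prop :=
  well_founded ltK /\
  (forall a b c, ltK a b -> ltK b c -> ltK a c) /\
  (forall a b, ltK a b \/ a = b \/ ltK b a).

Definition initial_ordinal : Prop := forall a, ~ inj_le K (seg a).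

Definition uncountable : Prop := ~ inj_le K nat.

Definition regular : Prop :=
  forall S : K -> Prop, card_lt {x | S x} K -> exists a, forall x, S x -> ltK x a.

(** kappa^{<kappa} = kappa : kappa^gamma <= kappa for every gamma < kappa
    (the cardinals < kappa are exactly the |seg a|) *)
Definition kappa_lt_kappa_eq : Prop := forall a, inj_le (seg a -> K) K.

Definition pow_omega_below : Prop := forall a, card_lt (nat -> seg a) K.

(** kappa = lambda^+ where lambda = |seg a| : every cardinal < kappa is <= lambda *)
Definition successor_cardinal : Prop :=
  exists a, forall b, inj_le (seg b) (seg a).

Definition ksucc (i j : K) : Prop :=
  ltK i j /\ forall k, ltK i k -> k = j \/ ltK j k.

Variable k0 : K.  (* the least element 0 of K *)

Definition I0 : Type :=
  {f : nat -> K * rat | exists N, forall n, N <= n -> fst (f n) = k0}.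

Definition lexKQ (x y : K * rat) : Prop :=
  ltK x.1 y.1 \/ (x.1 = y.1 /\ (x.2 < y.2)%R).

Definition ltI0 (f g : I0) : Prop :=
  exists n, (forall m, m < n -> sval f m = sval g m) /\ lexKQ (sval f n) (sval g n).

(** * The construction I^0 <= I^1 <= ... , I = \bigcup_{i<kappa} I^i.
    [stage i] is I^i (as a subset of I), [nw i nu] is nu^{i+1}. *)
Definition is_construction (I : Type) (ltI : I -> I -> Prop)
  (emb : I0 -> I) (stage : K -> I -> Prop) (nw : K -> I -> I) : Prop :=
  (forall x, ~ ltI x x) /\
  (forall x y z, ltI x y -> ltI y z -> ltI x z) /\
  (forall x y, ltI x y \/ x = y \/ ltI y x) /\
  (forall f g, emb f = emb g -> f = g) /\
  (forall f g, ltI (emb f) (emb g) <-> ltI0 f g) /\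
  (forall x, stage k0 x <-> exists f, x = emb f) /\
  (forall i nu, stage i nu ->
     ~ stage i (nw i nu) /\ ltI (nw i nu) nu /\
     (forall tau, stage i tau -> tau <> nu -> (ltI tau (nw i nu) <-> ltI tau nu))) /\
  (forall i nu mu, stage i nu -> stage i mu -> nu <> mu ->
     (ltI (nw i nu) (nw i mu) <-> ltI nu mu)) /\
  (forall i j, ksucc i j -> forall x,
     stage j x <-> (stage i x \/ exists nu, stage i nu /\ x = nw i nu)) /\
  (forall j, j <> k0 -> (forall i, ~ ksucc i j) -> forall x,
     stage j x <-> exists i, ltK i j /\ stage i x) /\
  (forall x, exists i, stage i x).

End Kappa.

Inductive term (P : Type) := tVar | tPar of P.
Inductive atom (P : Type) := aLt of term P & term P | aEq of term P & term P.
Inductive lit (P : Type) := lPos of atom P | lNeg of atom P.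
Arguments tVar {P}.

Section Types.
Variables (A : Type) (ltA : A -> A -> Prop) (B : A -> Prop).

Definition eval_term (a : A) (t : term {x | B x}) : A :=
  match t with tVar => a | tPar b => sval b end.

Definition sat_atom (a : A) (phi : atom {x | B x}) : Prop :=
  match phi with
  | aLt t1 t2 => ltA (eval_term a t1) (eval_term a t2)
  | aEq t1 t2 => eval_term a t1 = eval_term a t2
  end.

Definition sat_lit (a : A) (l : lit {x | B x}) : Prop :=
  match l with lPos phi => sat_atom a phi | lNeg phi => ~ sat_atom a phi end.

Definition tp_bs (a : A) : lit {x | B x} -> Prop := fun l => sat_lit a l.
End Types.

Definition lt_kappa_bs_stable (K A : Type) (ltA : A -> A -> Prop) : Prop :=
  forall B : A -> Prop, card_lt {x | B x} K ->
    card_lt {T : lit {x | B x} -> Prop | exists a : A, T = @tp_bs A ltA B a} K.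

(* Main.v *)
Require Import Defs.
From mathcomp Require Import all_boot all_order all_algebra.
From mathcomp Require Import zify.
From Stdlib Require Import Classical ClassicalEpsilon FunctionalExtensionality PropExtensionality ProofIrrelevance.
Import Order.TTheory GRing.Theory Num.Theory.
Set Implicit Arguments.
Unset Strict Implicit.

Lemma inj_trans (X Y Z : Type) : inj_le X Y -> inj_le Y Z -> inj_le X Z.
Proof.
move=> [f fi] [g gi]; exists (fun x => g (f x)) => x y h; exact: fi (gi _ _ h).
Qed.

Lemma inj_refl (X : Type) : inj_le X X.
Proof. by exists id. Qed.

Lemma sig_val_inj (X : Type) (P : X -> Prop) (a b : {x | P x}) : sval a = sval b -> a = b.
Proof.
case: a b => [a pa] [b pb] /= e; subst b; by rewrite (proof_irrelevance _ pa pb).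
Qed.

Lemma choose_fun (X Y : Type) (P : X -> Y -> Prop) :
  (forall x, exists y, P x y) -> exists f : X -> Y, forall x, P x (f x).
Proof.
move=> h; exists (fun x => proj1_sig (constructive_indefinite_description _ (h x))).
move=> x; exact: proj2_sig (constructive_indefinite_description _ (h x)).
Qed.

Section Card.
Variables (K : Type) (ltK : K -> K -> Prop) (k0 : K).
Hypothesis Hwo : strict_wellorder ltK.
Hypothesis Hcard : initial_ordinal ltK.
Hypothesis Hunc : uncountable K.
Hypothesis Hreg : regular ltK.
Hypothesis Hom : pow_omega_below ltK.

Definition small (X : Type) := card_lt X K.

Lemma ltK_irr a : ~ ltK a a.
Proof.
intro h. pose proof (proj1 Hwo a) as acc. induction acc as [a _ IH]. exact (IH a h h).
Qed.

Lemma ltK_trans a b c : ltK a b -> ltK b c -> ltK a c.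
Proof. exact: (proj1 (proj2 Hwo)). Qed.

Lemma ltK_tri a b : ltK a b \/ a = b \/ ltK b a.
Proof. exact: (proj2 (proj2 Hwo)). Qed.

Lemma ltK_asym a b : ltK a b -> ltK b a -> False.
Proof. move=> h1 h2; exact: ltK_irr (ltK_trans h1 h2). Qed.

Lemma small_inj X Y : inj_le X Y -> small Y -> small X.
Proof.
move=> h [h1 h2]; split; first exact: inj_trans h h1.
move=> h3; apply: h2; exact: inj_trans h3 h.
Qed.

Lemma seg_small a : small (seg ltK a).
Proof.
split; last exact: Hcard.
exists (@sval _ _) => x y; exact: sig_val_inj.
Qed.

Lemma small_seg X : small X -> exists a, inj_le X (seg ltK a).
Proof.
move=> [[g gi] nK].
pose S := fun k => exists x, g x = k.
have hS : card_lt {k | S k} K.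
  split.
    exists (@sval _ _) => x y; exact: sig_val_inj.
  move=> hK; apply: nK; apply: inj_trans hK _.
  have [h hh] : exists h : {k | S k} -> X, forall s, g (h s) = sval s.
    apply: (@choose_fun _ _ (fun s y => g y = sval s)) => -[k [x e]]; by exists x.
  exists h => s t e; apply: sig_val_inj; by rewrite -hh e hh.
have [a Ha] := Hreg hS.
have gS : forall x, ltK (g x) a by move=> x; apply: Ha; exists x.
exists a; exists (fun x => exist _ (g x) (gS x)) => x y e.
apply: gi; exact: (f_equal (@sval _ _) e).
Qed.

Lemma bound2 a b : exists c, ltK a c /\ ltK b c.
Proof.
have hS : card_lt {x | x = a \/ x = b} K.
  split.
    exists (@sval _ _) => x y; exact: sig_val_inj.
  move=> [f fi]; apply: Hunc.
  exists (fun k => if excluded_middle_informative (sval (f k) = a) then 0%N else 1%N).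
  move=> x y.
  case: (excluded_middle_informative (sval (f x) = a)) => h1;
  case: (excluded_middle_informative (sval (f y) = a)) => h2 // _; apply: fi.
    apply: sig_val_inj; by rewrite h1 h2.
  apply: sig_val_inj.
  case: (proj2_sig (f x)) => e1; first by [].
  case: (proj2_sig (f y)) => e2; first by [].
  by rewrite e1 e2.
have [c Hc] := Hreg hS.
exists c; split; apply: Hc; by [left | right].
Qed.

Lemma seg_mono a c : ltK a c -> inj_le (seg ltK a) (seg ltK c).
Proof.
move=> h; exists (fun s => exist _ (sval s) (ltK_trans (proj2_sig s) h)) => x y e.
apply: sig_val_inj; exact: (f_equal (@sval _ _) e).
Qed.

Lemma big_seg a : exists c, ltK a c /\ exists k1, ltK k0 k1 /\ ltK k1 c /\ ltK k0 c.
Proof.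
have [k1 [h1 _]] := bound2 k0 k0.
have [c [h2 h3]] := bound2 a k1.
exists c; split => //; exists k1; split => //; split => //; exact: ltK_trans h1 h3.
Qed.

Lemma small_fun X : small X -> small (nat -> X).
Proof.
move=> /small_seg [a [h hi]].
apply: small_inj (Hom a).
exists (fun phi n => h (phi n)) => p q e.
apply: functional_extensionality => n; apply: hi; exact: (f_equal (fun r => r n) e).
Qed.

Lemma small_sum X Y : small X -> small Y -> small (X + Y).
Proof.
move=> /small_seg [a ha] /small_seg [b hb].
have [c1 [h1 h2]] := bound2 a b.
have [c [h3 [k1 [h4 [h5 h6]]]]] := big_seg c1.
have [ia iai] := inj_trans ha (seg_mono (ltK_trans h1 h3)).
have [ib ibi] := inj_trans hb (seg_mono (ltK_trans h2 h3)).
pose e0 : seg ltK c := exist _ k0 h6.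
pose e1 : seg ltK c := exist _ k1 h5.
have ne : e0 <> e1.
  move=> e; have e' := f_equal (@sval _ _) e; simpl in e'.
  rewrite -e' in h4; exact: ltK_irr h4.
apply: small_inj (Hom c).
exists (fun s => match s with
  | inl x => fun n => match n with 0%N => e0 | _ => ia x end
  | inr y => fun n => match n with 0%N => e1 | _ => ib y end end).
move=> [x|y] [x'|y'] e.
- by rewrite (iai _ _ (f_equal (fun r => r 1%N) e)).
- by case: ne; exact: (f_equal (fun r => r 0%N) e).
- by case: ne; symmetry; exact: (f_equal (fun r => r 0%N) e).
- by rewrite (ibi _ _ (f_equal (fun r => r 1%N) e)).
Qed.

Lemma small_nat : small nat.
Proof.
have [c [_ [k1 [h4 [h5 h6]]]]] := big_seg k0.
pose e0 : seg ltK c := exist _ k0 h6.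
pose e1 : seg ltK c := exist _ k1 h5.
have ne : e1 <> e0.
  move=> e; have e' := f_equal (@sval _ _) e; simpl in e'.
  rewrite e' in h4; exact: ltK_irr h4.
apply: small_inj (Hom c).
exists (fun n m => if excluded_middle_informative (m = n) then e1 else e0) => n n' e.
have := f_equal (fun r => r n) e; simpl.
destruct (excluded_middle_informative (n = n)) as [d1|c1]; last by case: c1.
destruct (excluded_middle_informative (n = n')) as [h|d2]; first by [].
move=> /ne; by [].
Qed.

Lemma small_of_nat X : inj_le X nat -> small X.
Proof. move=> h; exact: small_inj h small_nat. Qed.

Lemma small_prod X Y : small X -> small Y -> small (X * Y).
Proof.
move=> hx hy; apply: small_inj (small_fun (small_sum hx hy)).
exists (fun p n => match n with 0%N => inl p.1 | _ => inr p.2 end) => -[x y] [x' y'] e.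
have := f_equal (fun r => r 0%N) e; have := f_equal (fun r => r 1%N) e; simpl.
by move=> [->] [->].
Qed.

Lemma small_unit : small unit.
Proof. apply: small_of_nat; exists (fun _ => 0%N) => -[] [] _; by []. Qed.

Lemma small_bool : small bool.
Proof. apply: small_of_nat; exists (fun b : bool => b : nat) => -[] [] //. Qed.

Lemma small_option X : small X -> small (option X).
Proof.
move=> h; apply: small_inj (small_sum h small_unit).
exists (fun o => match o with Some x => inl x | None => inr tt end) => -[x|] [y|] //= [->] //.
Qed.

Lemma small_list X : small X -> small (list X).
Proof.
move=> h; apply: small_inj (small_fun (small_option h)).
exists (fun l => List.nth_error l) => l l' e; apply: List.nth_error_ext => n.
exact: (f_equal (fun r => r n) e).
Qed.

Lemma small_rat : small rat.
Proof. apply: small_of_nat; exists (@pickle rat); exact: pcan_inj (@pickleK_inv rat). Qed.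

End Card.

Lemma least_nat (P : nat -> Prop) n : P n -> exists k, P k /\ forall m, (m < k)%N -> ~ P m.
Proof.
have: forall N n, (n <= N)%N -> P n -> exists k, P k /\ forall m, (m < k)%N -> ~ P m.
  elim=> [|N IH] n' hn hp.
    exists n'; split => // m hm; lia.
  case: (classic (exists m, (m < n')%N /\ P m)) => [[m [hm pm]]|h].
    apply: (IH m) => //; lia.
  exists n'; split => // m hm pm; apply: h; by exists m.
move=> H hn; exact: (H n n (leqnn n) hn).
Qed.

Section L0.
Variables (K : Type) (ltK : K -> K -> Prop) (k0 : K).
Hypothesis Hwo : strict_wellorder ltK.
Hypothesis Hcard : initial_ordinal ltK.
Hypothesis Hunc : uncountable K.
Hypothesis Hreg : regular ltK.
Hypothesis Hom : pow_omega_below ltK.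

Lemma lexKQ_irr v : ~ lexKQ ltK v v.
Proof. case=> [h|[_ h]]. exact (ltK_irr Hwo h). move: h; by rewrite ltxx. Qed.

Definition agr (r f : I0 k0) n := forall m, (m < n)%N -> sval r m = sval f m.

Lemma ltI0_at (f h : I0 k0) m : agr f h m -> sval f m <> sval h m ->
  (ltI0 ltK f h <-> lexKQ ltK (sval f m) (sval h m)).
Proof.
move=> ha hne; split.
  move=> [n' [hb hl]].
  case: (ltngtP n' m) => c.
  - by rewrite (ha n' c) in hl; case: (lexKQ_irr hl).
  - by case: hne; apply: hb.
  - by subst.
move=> hl; exists m; split => //.
Qed.

Lemma first_diff (r f : I0 k0) N : ~ agr r f N ->
  exists m, (m < N)%N /\ agr r f m /\ sval r m <> sval f m.
Proof.
elim: N => [|N IH] h.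
  by case: h => m; rewrite ltn0.
case: (classic (agr r f N)) => ha.
  exists N; split => //; split => // e; apply: h => m hm.
  case: (ltngtP m N) => c; [exact: ha | lia | by subst].
have [m [h1 h2]] := IH ha; exists m; split => //; lia.
Qed.

Definition pre (R : I0 k0 -> Prop) (og : option {g | R g}) m : K * rat :=
  match og with Some g => sval (sval g) m | None => (k0, 0%R) end.

Definition fn (R : I0 k0 -> Prop) (og : option {g | R g}) n (v : K * rat) m :=
  if (m < n)%N then pre og m else if m == n then v else (k0, 0%R).

Lemma fn_ok R og n v : exists N, forall m, (N <= m)%N -> fst (@fn R og n v m) = k0.
Proof.
exists n.+1 => m hm; rewrite /fn.
have -> : (m < n)%N = false by lia.
have -> : (m == n) = false by lia.
by [].
Qed.

Definition mk R og n v : I0 k0 := exist _ (@fn R og n v) (fn_ok og n v).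

Lemma L0 (R : I0 k0 -> Prop) : small K {f | R f} ->
  exists (C : Type) (d : C -> I0 k0), small K C /\
  forall f, ~ R f -> exists c, ~ R (d c) /\ forall r, R r ->
    (ltI0 ltK r f <-> ltI0 ltK r (d c)) /\ (ltI0 ltK f r <-> ltI0 ltK (d c) r).
Proof.
move=> hR.
pose V := fun v => exists r, R r /\ exists m, sval r m = v.
have hV : small K {v | V v}.
  apply: small_inj (small_prod k0 Hwo Hunc Hreg Hom hR (small_nat k0 Hwo Hunc Hreg Hom)).
  have [h hh] : exists h : {v | V v} -> {f | R f} * nat,
      forall s, sval (sval (h s).1) (h s).2 = sval s.
    apply: (@choose_fun _ _ (fun s p => sval (sval p.1) p.2 = sval s)).
    move=> [v [r [hr [m e]]]]; by exists (exist _ r hr, m).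
  exists h => s t e; apply: sig_val_inj; by rewrite -hh e hh.
pose S := fun k => exists v, V v /\ v.1 = k.
have hS : small K {k | S k}.
  apply: small_inj hV.
  have [h hh] : exists h : {k | S k} -> {v | V v}, forall s, (sval (h s)).1 = sval s.
    apply: (@choose_fun _ _ (fun s p => (sval p).1 = sval s)).
    move=> [k [v [hv e]]]; by exists (exist _ v hv).
  exists h => s t e; apply: sig_val_inj; by rewrite -hh e hh.
have [beta Hb] := Hreg hS.
have Vb : forall r m, R r -> ltK (sval r m).1 beta.
  move=> r m hr; apply: Hb; exists (sval r m); split => //; exists r; split => //; by exists m.
pose C := ({f : I0 k0 | forall n, V (sval f n)} +
   (option {g | R g} * nat * option (seg ltK beta * rat)))%type.
pose vv (ov : option (seg ltK beta * rat)) : K * rat :=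
  match ov with Some p => (sval p.1, p.2) | None => (beta, 0%R) end.
pose d (c : C) : I0 k0 := match c with
  | inl f => sval f
  | inr (og, n, ov) => mk og n (vv ov) end.
exists C, d; split.
  apply: (small_sum k0 Hwo Hunc Hreg Hom).
    apply: small_inj (small_fun Hreg Hom hV).
    exists (fun (f : {f : I0 k0 | forall n, V (sval f n)}) n => exist V (sval (sval f) n) (proj2_sig f n)) => f g e.
    apply: sig_val_inj; apply: sig_val_inj; apply: functional_extensionality => n.
    exact: (f_equal (@sval _ _) (f_equal (fun r => r n) e)).
  apply: (small_prod k0 Hwo Hunc Hreg Hom).
    apply: (small_prod k0 Hwo Hunc Hreg Hom).
      exact: (small_option k0 Hwo Hunc Hreg Hom).
    exact: (small_nat k0 Hwo Hunc Hreg Hom).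
  apply: (small_option k0 Hwo Hunc Hreg Hom).
  apply: (small_prod k0 Hwo Hunc Hreg Hom); first exact: seg_small.
  exact: (small_rat k0 Hwo Hunc Hreg Hom).
move=> f hf.
case: (classic (forall n, exists r, R r /\ agr r f n.+1)) => hA.
  have hv : forall n, V (sval f n).
    move=> n; have [r [hr ha]] := hA n; exists r; split => //; exists n; exact: ha.
  by exists (inl (exist _ f hv)).
have [n0 hn0] : exists n, forall r, R r -> ~ agr r f n.+1.
  apply: NNPP => h; apply: hA => n; apply: NNPP => h2; apply: h; exists n => r hr ha.
  apply: h2; by exists r.
have [n [Pn Pmin]] := @least_nat (fun n => forall r, R r -> ~ agr r f n.+1) n0 hn0.
have [og hog] : exists og : option {g | R g}, forall m, (m < n)%N -> pre og m = sval f m.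
  case: n Pn Pmin => [|n'] Pn Pmin; first by exists None => m; rewrite ltn0.
  have : ~ (forall r, R r -> ~ agr r f n'.+1) by apply: Pmin.
  move=> h; apply: NNPP => h2; apply: h => r hr ha; apply: h2.
  by exists (Some (exist _ r hr)).
pose v := sval f n.
have [ov hov] : exists ov, (vv ov = v) \/ (ov = None /\ ~ ltK v.1 beta).
  case: (classic (ltK v.1 beta)) => hb.
    exists (Some (exist _ v.1 hb, v.2)); left; exact: (esym (surjective_pairing v)).
  by exists None; right.
exists (inr (og, n, ov)).
have fpre : forall m, (m < n)%N -> sval (d (inr (og, n, ov))) m = sval f m.
  move=> m hm; rewrite /= /fn hm; exact: hog.
have fn_n : sval (d (inr (og, n, ov))) n = vv ov.
  by rewrite /= /fn ltnn eqxx.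
set f' := d (inr (og, n, ov)) in fpre fn_n *.
have keyn : forall r, R r -> agr r f n ->
   sval r n <> v /\ sval r n <> vv ov /\
   (lexKQ ltK (sval r n) v <-> lexKQ ltK (sval r n) (vv ov)) /\
   (lexKQ ltK v (sval r n) <-> lexKQ ltK (vv ov) (sval r n)).
  move=> r hr ha.
  have rnv : sval r n <> v.
    move=> e; apply: (Pn r hr) => m hm.
    case: (ltngtP m n) => c; [exact: ha | lia | by subst].
  case: hov => [ev|[eo nb]].
    by rewrite ev; split => //; split => //.
  subst ov; rewrite /vv.
  have rb := Vb r n hr.
  have bv : beta = v.1 \/ ltK beta v.1.
    by case: (ltK_tri Hwo v.1 beta) => [h|[h|h]]; [case: nb|left|right].
  split => //; split.
    move=> e; rewrite e /= in rb; exact (ltK_irr Hwo rb).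
  split; split.
  - move=> _; by left.
  - move=> _; left; case: bv => [<-|h] //; exact (ltK_trans Hwo rb h).
  - case=> [h|[h _]].
      by case: nb; exact (ltK_trans Hwo h rb).
    by case: nb; rewrite h.
  - case=> [h|[h _]] /=.
      by case: (ltK_asym Hwo h rb).
    by simpl in h; rewrite -h in rb; case: (ltK_irr Hwo rb).
split.
  move=> hr'.
  case: hov => [ev|[eo nb]].
    apply: (Pn f' hr') => m hm.
    case: (ltngtP m n) => c; [exact: fpre | lia | subst m; by rewrite fn_n ev].
  have := Vb f' n hr'; rewrite fn_n eo /=; exact (ltK_irr Hwo (a:=beta)).
move=> r hr.
have [m [hm [ha hne]]] := first_diff (Pn r hr).
have ha' : agr r f' m.
  move=> k hk; rewrite ha // fpre //; lia.
case: (ltngtP m n) => c; last first.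
- subst m.
  have [k1 [k2 [k3 k4]]] := keyn r hr ha.
  rewrite (ltI0_at ha hne) (ltI0_at ha'); last by rewrite fn_n.
  have ha2 : agr f r n by move=> k hk; rewrite ha.
  have ha2' : agr f' r n by move=> k hk; rewrite ha'.
  rewrite (ltI0_at ha2) ?(ltI0_at ha2'); last by move=> e; apply: hne.
    rewrite fn_n; split => //.
    by rewrite fn_n => e; apply: k2.
- lia.
- have e : sval f' m = sval f m by apply: fpre.
  rewrite (ltI0_at ha hne) (ltI0_at ha'); last by rewrite e.
  have ha2 : agr f r m by move=> k hk; rewrite ha.
  have ha2' : agr f' r m by move=> k hk; rewrite ha'.
  rewrite (ltI0_at ha2) ?(ltI0_at ha2'); last by move=> e'; apply: hne.
    by rewrite e.
  by rewrite e => e'; apply: hne.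
Qed.

End L0.

Lemma In_rcons (T : Type) (p : seq T) x s : List.In s (rcons p x) -> List.In s p \/ s = x.
Proof.
elim: p => [|a p IH] /=; first by case=> [->|[]]; right.
case=> [->|/IH [h|h]]; [left; left | left; right | right] => //.
Qed.

Section Constr.
Variables (K : Type) (ltK : K -> K -> Prop) (k0 : K).
Hypothesis Hwo : strict_wellorder ltK.
Hypothesis Hk0 : forall k, k = k0 \/ ltK k0 k.
Variables (I : Type) (ltI : I -> I -> Prop) (emb : I0 k0 -> I)
  (stage : K -> I -> Prop) (nw : K -> I -> I).
Hypothesis HI : is_construction ltK ltI emb stage nw.
Hypothesis Hcard : initial_ordinal ltK.
Hypothesis Hunc : uncountable K.
Hypothesis Hreg : regular ltK.
Hypothesis Hom : pow_omega_below ltK.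

Lemma lt_irr x : ~ ltI x x.
Proof. by case: HI. Qed.
Lemma lt_trans x y z : ltI x y -> ltI y z -> ltI x z.
Proof. case: HI => _ [h _]; exact: h. Qed.
Lemma lt_tri x y : ltI x y \/ x = y \/ ltI y x.
Proof. case: HI => _ [_ [h _]]; exact: h. Qed.
Lemma lt_asym x y : ltI x y -> ltI y x -> False.
Proof. move=> h1 h2; exact: lt_irr (lt_trans h1 h2). Qed.
Lemma emb_inj f g : emb f = emb g -> f = g.
Proof. case: HI => _ [_ [_ [h _]]]; exact: h. Qed.
Lemma emb_lt f g : ltI (emb f) (emb g) <-> ltI0 ltK f g.
Proof. case: HI => _ [_ [_ [_ [h _]]]]; exact: h. Qed.
Lemma stage0E x : stage k0 x <-> exists f, x = emb f.
Proof. case: HI => _ [_ [_ [_ [_ [h _]]]]]; exact: h. Qed.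
Lemma nw_prop i nu : stage i nu ->
     ~ stage i (nw i nu) /\ ltI (nw i nu) nu /\
     (forall tau, stage i tau -> tau <> nu -> (ltI tau (nw i nu) <-> ltI tau nu)).
Proof. case: HI => _ [_ [_ [_ [_ [_ [h _]]]]]]; exact: h. Qed.
Lemma stage_succ i j : ksucc ltK i j -> forall x,
     stage j x <-> (stage i x \/ exists nu, stage i nu /\ x = nw i nu).
Proof. case: HI => _ [_ [_ [_ [_ [_ [_ [_ [h _]]]]]]]]; exact: h. Qed.
Lemma stage_lim j : j <> k0 -> (forall i, ~ ksucc ltK i j) -> forall x,
     stage j x <-> exists i, ltK i j /\ stage i x.
Proof. case: HI => _ [_ [_ [_ [_ [_ [_ [_ [_ [h _]]]]]]]]]; exact: h. Qed.
Lemma stage_ex x : exists i, stage i x.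
Proof. case: HI => _ [_ [_ [_ [_ [_ [_ [_ [_ [_ h]]]]]]]]]; exact: h. Qed.

Lemma K_cases j : j = k0 \/ (exists i, ksucc ltK i j) \/
   (j <> k0 /\ forall i, ~ ksucc ltK i j).
Proof.
case: (classic (j = k0)) => h; first by left.
case: (classic (exists i, ksucc ltK i j)) => h2; first by right; left.
right; right; split => // i hi; apply: h2; by exists i.
Qed.

Lemma succ_below i j k : ksucc ltK i j -> ltK k j -> k = i \/ ltK k i.
Proof.
move=> [hij hs] hk; case: (ltK_tri Hwo k i) => [h|[h|h]]; [by right|by left|].
case: (hs k h) => [e|e]; first by subst k; case: (ltK_irr Hwo hk).
by case: (ltK_asym Hwo hk e).
Qed.

Lemma stage_mono j : forall i x, ltK i j -> stage i x -> stage j x.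
Proof.
pose proof (proj1 Hwo j) as acc; induction acc as [j _ IH].
move=> i x hij hx.
case: (K_cases j) => [e|[[i' hs]|[hne hl]]].
- subst j; case: (Hk0 i) => e; first by subst i; case: (ltK_irr Hwo hij).
  by case: (ltK_asym Hwo hij e).
- apply/(stage_succ hs); left.
  case: (succ_below hs hij) => [e|h]; first by subst.
  exact: (IH i' (proj1 hs) i x h hx).
- apply/(stage_lim hne hl); by exists i.
Qed.

Lemma stage_le i j x : (i = j \/ ltK i j) -> stage i x -> stage j x.
Proof. case=> [->|h] //; exact: stage_mono. Qed.

Lemma stage0_all k x : stage k0 x -> stage k x.
Proof. apply: stage_le; case: (Hk0 k) => h; [left|right] => //. Qed.

Definition anc k x w := stage k w /\
  (x = w \/ (ltI x w /\ forall t, stage k t -> ltI t w -> ltI t x)).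

Lemma anc_self k x : stage k x -> anc k x x.
Proof. by move=> h; split => //; left. Qed.

Lemma anc_le k x w : anc k x w -> ~ ltI w x.
Proof.
move=> [_ [<-|[h _]]]; first exact: lt_irr.
move=> h'; exact: lt_asym h h'.
Qed.

Lemma anc_cmp k x y w u : anc k x w -> anc k y u -> ltI w u -> ltI x y.
Proof.
move=> [hw hx] [hu hy] hwu.
have wy : ltI w y by case: hy => [->|[_ h]] //; exact: h hw hwu.
case: hx => [->|[h _]] //; exact: lt_trans h wy.
Qed.

Lemma anc_unique k x w u : anc k x w -> anc k x u -> w = u.
Proof.
move=> h1 h2; case: (lt_tri w u) => [h|[h|h]] //.
  by case: (lt_irr (anc_cmp h1 h2 h)).
by case: (lt_irr (anc_cmp h2 h1 h)).
Qed.

Lemma anc_nw k i nu w : (k = i \/ ltK k i) -> stage i nu -> anc k nu w ->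
  anc k (nw i nu) w.
Proof.
move=> hki hnu [hw hx]; split => //; right.
have [hn1 [hn2 hn3]] := nw_prop hnu.
case: hx => [e|[h1 h2]].
  subst w; split => // t ht htn; apply/(hn3 t (stage_le hki ht)) => // e.
  subst t; exact: lt_irr htn.
split; first exact: lt_trans hn2 h1.
move=> t ht htw; have tn := h2 t ht htw.
apply/(hn3 t (stage_le hki ht)) => // e; subst t; exact: lt_irr tn.
Qed.

Lemma anc_exists k x : exists w, anc k x w.
Proof.
have [j hj] := stage_ex x.
move: x hj; pose proof (proj1 Hwo j) as acc; induction acc as [j _ IH] => x hx.
case: (ltK_tri Hwo j k) => [h|[h|h]].
- exists x; apply: anc_self; exact: stage_mono h hx.
- subst; exists x; exact: anc_self.
case: (K_cases j) => [e|[[i' hs]|[hne hl]]].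
- subst j; case: (Hk0 k) => e; first by subst k; case: (ltK_irr Hwo h).
  by case: (ltK_asym Hwo h e).
- case/(stage_succ hs): hx => [hx|[nu [hnu ->]]].
    exact: (IH i' (proj1 hs)).
  have [w hw] := IH i' (proj1 hs) nu hnu.
  exists w; apply: anc_nw hnu hw; exact: succ_below hs h.
- case/(stage_lim hne hl): hx => i [hi hx]; exact: IH hi x hx.
Qed.

Lemma anc_trans k i x w u : (k = i \/ ltK k i) -> anc i x w -> anc k w u -> anc k x u.
Proof.
move=> hki [hw hx] [hu hwu]; split => //.
case: hx => [->|[h1 h2]] //; right.
case: hwu => [e|[h3 h4]].
  subst u; split => // t ht; apply: h2; exact: stage_le hki ht.
split; first exact: lt_trans h1 h3.
move=> t ht htu; apply: h2 (h4 t ht htu); exact: stage_le hki ht.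
Qed.

Definition decode g (p : seq K) := foldl (fun acc s => nw s acc) (emb g) p.

Lemma block j y : stage j y -> exists g p,
  (forall s, List.In s p -> ltK s j) /\ y = decode g p /\ anc k0 y (emb g).
Proof.
move: y; pose proof (proj1 Hwo j) as acc; induction acc as [j _ IH] => y hy.
case: (K_cases j) => [e|[[i' hs]|[hne hl]]].
- subst j; case/stage0E: (hy) => g e; subst y.
  exists g, [::]; split => //; split => //; exact: anc_self.
- case/(stage_succ hs): hy => [hy|[nu [hnu ->]]].
    have [g [p [h1 [h2 h3]]]] := IH i' (proj1 hs) y hy.
    exists g, p; split; last by split. move=> s /h1 hs2. exact (ltK_trans Hwo hs2 (proj1 hs)).
  have [g [p [h1 [h2 h3]]]] := IH i' (proj1 hs) nu hnu.
  exists g, (rcons p i'); split.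
    move=> s hs3; case: (In_rcons hs3) => [/h1 h|->]; last exact: (proj1 hs).
    exact (ltK_trans Hwo h (proj1 hs)).
  split; first by rewrite /decode foldl_rcons -/(decode g p) -h2.
  apply: anc_nw hnu h3; case: (Hk0 i') => e; [left|right] => //.
- case/(stage_lim hne hl): hy => i [hi hy].
  have [g [p [h1 [h2 h3]]]] := IH i hi y hy.
  exists g, p; split; last by split. move=> s /h1 hs2; exact (ltK_trans Hwo hs2 hi).
Qed.


Lemma gt_iff x b : ltI x b <-> (~ ltI b x /\ b <> x).
Proof.
split.
  move=> h; split; first by move=> h'; exact: lt_asym h h'.
  move=> e; subst; exact: lt_irr h.
move=> [h1 h2]; case: (lt_tri x b) => [h|[h|h]]; [done | by case: h2 | by case: h1].
Qed.

Lemma tp_eq (B : I -> Prop) x y :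
  (forall b, B b -> (ltI b x <-> ltI b y)) -> (forall b, B b -> (b = x <-> b = y)) ->
  tp_bs ltI (B := B) x = tp_bs ltI (B := B) y.
Proof.
move=> hl he.
have hg : forall b, B b -> (ltI x b <-> ltI y b).
  move=> b hb. rewrite (gt_iff x b) (gt_iff y b). 
  have := hl b hb; have := he b hb; tauto.
have ha : forall phi, sat_atom ltI (B:=B) x phi <-> sat_atom ltI (B:=B) y phi.
  case=> [t1 t2|t1 t2]; case: t1 => [|[b1 hb1]]; case: t2 => [|[b2 hb2]]; simpl.
  - split => h; [by case: (lt_irr h) | by case: (lt_irr h)].
  - exact (hg b2 hb2).
  - exact (hl b1 hb1).
  - tauto.
  - tauto.
  - have [h1 h2] := he b2 hb2; split => e; [exact (esym (h1 (esym e))) | exact (esym (h2 (esym e)))].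
  - exact (he b1 hb1).
  - tauto.
apply: functional_extensionality => l; apply: propositional_extensionality.
case: l => phi; simpl; have := ha phi; tauto.
Qed.

Lemma lift_list i (p : seq K) : (forall s, List.In s p -> ltK s i) ->
  exists q : seq (seg ltK i), map (@sval _ _) q = p.
Proof.
elim: p => [|a p IH] h; first by exists [::].
have [q hq] := IH (fun s hs => h s (or_intror hs)).
by exists (exist _ a (h a (or_introl erefl)) :: q) => /=; rewrite hq.
Qed.

Lemma blk x b f g : anc k0 x (emb f) -> anc k0 b (emb g) -> f <> g ->
  (ltI b x <-> ltI0 ltK g f) /\ b <> x.
Proof.
move=> hx hb ne; split; last first.
  move=> e; subst b; apply: ne; apply: emb_inj; exact: anc_unique hx hb.
split.
  move=> h; case: (lt_tri (emb g) (emb f)) => [h'|[h'|h']].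
  - by apply/emb_lt.
  - by case: ne; apply: emb_inj.
  - by case: (lt_asym h (anc_cmp hx hb h')).
move=> /emb_lt h; exact: anc_cmp hb hx h.
Qed.

Lemma stable_main : lt_kappa_bs_stable K ltI.
Proof.
move=> B hB.
have [i hi] : exists i, forall b, B b -> stage i b.
  have [s hs] : exists s : {x | B x} -> K, forall b, stage (s b) (sval b).
    apply: (@choose_fun _ _ (fun b k => stage k (sval b))) => b; exact: stage_ex.
  pose S := fun k => exists b, s b = k.
  have hS : small K {k | S k}.
    apply: small_inj hB.
    have [h hh] : exists h : {k | S k} -> {x | B x}, forall k, s (h k) = sval k.
      apply: (@choose_fun _ _ (fun k b => s b = sval k)) => -[k [b e]]; by exists b.
    exists h => k1 k2 e; apply: sig_val_inj; by rewrite -hh e hh.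
  have [i Hi] := Hreg hS.
  exists i => b hb; apply: (stage_mono (i := s (exist _ b hb))).
    apply: Hi; by exists (exist _ b hb).
  exact: (hs (exist _ b hb)).
pose R := fun f => exists b, B b /\ anc k0 b (emb f).
have hR : small K {f | R f}.
  apply: small_inj hB.
  have [h hh] : exists h : {f | R f} -> {x | B x}, forall f, anc k0 (sval (h f)) (emb (sval f)).
    apply: (@choose_fun _ _ (fun f b => anc k0 (sval b) (emb (sval f)))).
    move=> [f [b [hb ha]]]; by exists (exist _ b hb).
  exists h => f1 f2 e; apply: sig_val_inj; apply: emb_inj.
  apply: (anc_unique (hh f1)); by rewrite e.
have [C0 [d0 [hC0 hd0]]] := L0 Hwo Hcard Hunc Hreg Hom hR.
pose C := (C0 + ({f | R f} * seq (seg ltK i) * bool))%type.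
pose dec (c : C) : I := match c with
  | inl c0 => emb (d0 c0)
  | inr (f, q, fl) => if fl then nw i (decode (sval f) (map (@sval _ _) q))
                      else decode (sval f) (map (@sval _ _) q) end.
have hC : small K C.
  apply: (small_sum k0 Hwo Hunc Hreg Hom) => //.
  apply: (small_prod k0 Hwo Hunc Hreg Hom); last exact: (small_bool k0 Hwo Hunc Hreg Hom).
  apply: (small_prod k0 Hwo Hunc Hreg Hom) => //.
  apply: (small_list k0 Hwo Hunc Hreg Hom); exact: seg_small.
have hstage0 : forall f, stage k0 (emb f) by move=> f; apply/stage0E; by exists f.
have claim : forall x, exists c, tp_bs ltI (B := B) x = tp_bs ltI (B := B) (dec c).
  move=> x.
  have [w0 hw0] := anc_exists k0 x.
  have [f ef] : exists f, w0 = emb f by apply/stage0E; exact: (proj1 hw0).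
  subst w0.
  case: (classic (R f)) => hRf; last first.
    have [c [nR hcut]] := hd0 f hRf.
    exists (inl c); apply: tp_eq => b hb.
      have [wb hwb] := anc_exists k0 b.
      have [g eg] : exists g, wb = emb g by apply/stage0E; exact: (proj1 hwb).
      subst wb.
      have Rg : R g by exists b.
      have [e1 _] := blk hw0 hwb (fun e => hRf (eq_ind_r R Rg e)).
      have [e2 _] := blk (anc_self (hstage0 (d0 c))) hwb (fun e => nR (eq_ind_r R Rg e)).
      rewrite /= e1 e2; exact: (proj1 (hcut g Rg)).
    have [wb hwb] := anc_exists k0 b.
    have [g eg] : exists g, wb = emb g by apply/stage0E; exact: (proj1 hwb).
    subst wb.
    have Rg : R g by exists b.
    have [_ n1] := blk hw0 hwb (fun e => hRf (eq_ind_r R Rg e)).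
    have [_ n2] := blk (anc_self (hstage0 (d0 c))) hwb (fun e => nR (eq_ind_r R Rg e)).
    by split => e.
  have [w hw] := anc_exists i x.
  have [u hu] := anc_exists k0 w.
  have hki : k0 = i \/ ltK k0 i by case: (Hk0 i) => e; [left|right].
  have eu : u = emb f := anc_unique (anc_trans hki hw hu) hw0.
  subst u.
  have [g [p [hp [ew hg]]]] := block (proj1 hw).
  have egf : g = f by apply: emb_inj; exact: anc_unique hg hu.
  subst g.
  have [q hq] := lift_list hp.
  case: (classic (x = w)) => exw.
    exists (inr (exist _ f hRf, q, false)); by rewrite /= hq -ew exw.
  exists (inr (exist _ f hRf, q, true)); rewrite /= hq -ew.
  have [xw gap] : ltI x w /\ forall t, stage i t -> ltI t w -> ltI t x.
    by case: (proj2 hw) => // e; case: exw.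
  have [nn1 [nn2 nn3]] := nw_prop (proj1 hw).
  have xni : ~ stage i x.
    move=> hs; apply: exw; exact: anc_unique (anc_self hs) hw.
  apply: tp_eq => b hb.
    have hbi := hi b hb.
    split => h.
      have bw : b <> w by move=> e; subst b; exact: lt_asym h xw.
      apply/(nn3 b hbi bw); exact: lt_trans h xw.
    have bw : b <> w by move=> e; subst b; exact: lt_asym h nn2.
    apply: gap => //; exact/(nn3 b hbi bw).
  have hbi := hi b hb.
  split => e; subst b; [by case: xni | by case: nn1].
have [cod hcod] : exists cod : {T | exists a, T = tp_bs ltI (B := B) a} -> C,
    forall T, sval T = tp_bs ltI (B := B) (dec (cod T)).
  apply: (@choose_fun _ _ (fun T c => sval T = tp_bs ltI (B := B) (dec c))).
  move=> [T [a ea]] /=; rewrite ea; exact: claim.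
apply: small_inj hC; exists cod => T1 T2 e; apply: sig_val_inj; by rewrite !hcod e.
Qed.

End Constr.

Unset Implicit Arguments.
Set Strict Implicit.

Theorem mainTheorem15 (K : Type) (ltK : K -> K -> Prop) (k0 : K)
  (Hwo : strict_wellorder ltK)
  (Hk0 : forall k, k = k0 \/ ltK k0 k)
  (Hcard : initial_ordinal ltK)
  (Hunc : uncountable K)
  (Hreg : regular ltK)
  (Hkk : kappa_lt_kappa_eq ltK)
  (Hom : pow_omega_below ltK)
  (Hsucc : successor_cardinal ltK)
  (I : Type) (ltI : I -> I -> Prop) (emb : @I0 K k0 -> I)
  (stage : K -> I -> Prop) (nw : K -> I -> I)
  (HI : @is_construction K ltK k0 I ltI emb stage nw) :
  @lt_kappa_bs_stable K I ltI.
Proof.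
exact (@stable_main K ltK k0 Hwo Hk0 I ltI emb stage nw HI Hcard Hunc Hreg Hom).
Qed.
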